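(* For $k\ge1$ let $Z_k$ be the event that a random sequence $g_1,\ldots,g_t$ of elements of $\mathbb{Z}_{35^k}$ is good, and let $\mathcal{Z}=(Z_1,Z_2,\ldots)$. Then every threshold function $\tau$ for $\mathcal{Z}$ satisfies, as $k\to\infty$, \[\tau(k)\le k^2\exp\left[\left(3\lg 5\,\lg 7\,\lg k\right)^{1/3}-\left(\frac{2}{3}\right)\lg\lg k+O(1)\right].\]
   Context: For a finite additive group $\Gamma$, a sequence $(g_1,\ldots,g_t)$ of elements of $\Gamma$ is a zero-sum sequence if $g_1+\cdots+g_t=0_\Gamma$; its cross number is $\sum_i 1/|g_i|$ with $|g_i|$ the order of $g_i$; the sequence is good if it contains a zero-sum subsequence with cross number at most $1$. A random sequence of length $t$ is chosen uniformly among all length-$t$ sequences of elements of the group. A function $\tau(k)$ is a threshold for the sequence of events $(Z_k)$ if the probability of $Z_k$ with $t=f(k)$ tends to $1$ whenever $f(k)/\tau(k)\to\infty$ and tends to $0$ whenever $f(k)/\tau(k)\to0$. $\lg$ is the base-2 logarithm and $\exp$ the natural exponential. *)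

(* Defs.v *)
From HB Require Import structures.
From mathcomp Require Import all_boot all_order all_algebra all_fingroup.
From mathcomp Require Import all_classical all_reals all_analysis.
Set Implicit Arguments. Unset Strict Implicit. Unset Printing Implicit Defensive.
Import Order.TTheory GRing.Theory Num.Theory.
Import numFieldNormedType.Exports.
Local Open Scope ring_scope.

Definition zseq (n t : nat) := {ffun 'I_t -> 'Z_n}.

Definition cross_number (n t : nat) (s : zseq n t) (I : {set 'I_t}) : rat :=
  \sum_(i in I) (#[s i]%g)%:R^-1.

Definition good (n t : nat) (s : zseq n t) : bool :=
  [exists I : {set 'I_t},
     [&& I != finset.set0, (\sum_(i in I) s i == 0) & cross_number s I <= 1]].

Definition prob_good (R : realType) (n t : nat) : R :=
  (#|[set s : zseq n t | good s]|)%:R / (#|[set: zseq n t]|)%:R.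

Definition PZ (R : realType) (k t : nat) : R := prob_good R (35 ^ k) t.

Local Open Scope classical_set_scope.

Definition is_threshold (R : realType) (P : nat -> nat -> R) (tau : nat -> R) : Prop :=
  (forall k, 0 < tau k) /\
  forall f : nat -> nat,
    ((f k)%:R / tau k @[k --> \oo] --> +oo ->
       P k (f k) @[k --> \oo] --> (1:R)) /\
    ((f k)%:R / tau k @[k --> \oo] --> (0:R) ->
       P k (f k) @[k --> \oo] --> (0:R)).

Definition lg (R : realType) (x : R) : R := ln x / ln 2.

(* Main.v *)
Require Import Defs.
From HB Require Import structures.
From mathcomp Require Import all_boot all_order all_algebra all_fingroup.
From mathcomp Require Import all_classical all_reals all_analysis.
From mathcomp Require Import ring lra zify.
Import Order.TTheory GRing.Theory Num.Theory.
Import numFieldNormedType.Exports.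
Set Implicit Arguments. Unset Strict Implicit. Unset Printing Implicit Defensive.
Local Open Scope ring_scope.

Section Count.
Variable G : finZmodType.
Variable t : nat.
Local Notation D := {ffun 'I_t -> G}.

Lemma fiber_eq (H : finType) (phi : D -> H) (y0 : H) :
  (forall y, exists v : D, forall s, (phi (s + v) == y) = (phi s == y0)) ->
  forall y, #|[set s | phi s == y]| = #|[set s | phi s == y0]|.
Proof.
move=> hv y; have [v hv'] := hv y.
have -> : [set s | phi s == y] = ((fun s : D => s + v) @: [set s | phi s == y0]).
  apply/setP => s; rewrite inE; apply/idP/imsetP.
    move=> hs; exists (s - v); last by rewrite subrK.
    by rewrite inE -hv' subrK.
  by move=> [s' hs' ->]; rewrite hv'; rewrite inE in hs'.
by apply: card_imset; apply: addIr.
Qed.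

Lemma fiber_card (H : finType) (phi : D -> H) (y0 : H) :
  (forall y, exists v : D, forall s, (phi (s + v) == y) = (phi s == y0)) ->
  #|D| = (#|H| * #|[set s | phi s == y0]|)%N.
Proof.
move=> hv.
have fy : forall y, #|[set s | phi s == y]| = #|[set s | phi s == y0]|.
  move=> y; have [v hv'] := hv y.
  have -> : [set s | phi s == y] = ((fun s : D => s + v) @: [set s | phi s == y0]).
    apply/setP => s; rewrite inE; apply/idP/imsetP.
      move=> hs; exists (s - v); last by rewrite subrK.
      by rewrite inE -hv' subrK.
    by move=> [s' hs' ->]; rewrite hv'; rewrite inE in hs'.
  by apply: card_imset; apply: addIr.
transitivity (\sum_(s : D) 1)%N; first by rewrite sum1_card.
rewrite (partition_big phi predT) //=.
rewrite -sum_nat_const; apply: eq_bigr => y _.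
rewrite -(fy y) -sum1_card; apply: eq_bigl => s; by rewrite inE.
Qed.

Definition sA (A : {set 'I_t}) (s : D) : G := \sum_(i in A) s i.

Lemma sAD A s v : sA A (s + v) = sA A s + sA A v.
Proof. by rewrite /sA -big_split; apply: eq_bigr => i _; rewrite ffunE. Qed.

Definition e1 i (c : G) : D := [ffun j => if j == i then c else 0].

Lemma sA_e1 A i c : sA A (e1 i c) = if i \in A then c else 0.
Proof.
rewrite /sA; case: ifP => hi.
  rewrite (bigD1 i) //= ffunE eqxx big1 ?addr0 // => j /andP [_ hj].
  by rewrite ffunE (negbTE hj).
by rewrite big1 // => j hj; rewrite ffunE; case: eqP => // e; rewrite e hi in hj.
Qed.

Lemma addr_eq_same (x y : G) : (x + y == y) = (x == 0).
Proof. by rewrite -{2}[y]add0r (inj_eq (addIr y)). Qed.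

Lemma cardD : #|D| = (#|G| ^ t)%N.
Proof. by rewrite card_ffun card_ord. Qed.

Lemma cardZ1 (A : {set 'I_t}) : A != finset.set0 -> (#|G| * #|[set s : D | sA A s == 0%R]|)%N = (#|G| ^ t)%N.
Proof.
case/set0Pn => i hi; rewrite -cardD; symmetry; apply: fiber_card => y.
exists (e1 i y) => s; by rewrite sAD sA_e1 hi -{2}[y]add0r (inj_eq (addIr y)).
Qed.

Lemma cardZ2_aux (A B : {set 'I_t}) i j : i \in A -> i \notin B -> j \in B ->
  (#|G| * #|G| * #|[set s : D | (sA A s == 0%R) && (sA B s == 0%R)]|)%N = (#|G| ^ t)%N.
Proof.
move=> iA iB jB.
rewrite -cardD; symmetry.
rewrite -(card_prod G G).
pose phi := fun s : D => (sA A s, sA B s).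
have -> : [set s : D | (sA A s == 0) && (sA B s == 0)] = [set s | phi s == (0, 0)].
  by apply/setP => s; rewrite !inE /phi.
apply: (@fiber_card _ phi (0,0)) => -[c d].
exists (e1 i (if j \in A then c - d else c) + e1 j d) => s.
rewrite /phi !xpair_eqE !sAD !sA_e1 iA (negbTE iB) jB.
by case: (j \in A); rewrite ?addr0 ?add0r ?subrK !addr_eq_same.
Qed.

Lemma cardZ2 (A B : {set 'I_t}) : A != finset.set0 -> B != finset.set0 -> A != B ->
  (#|G| ^ 2 * #|[set s : D | (sA A s == 0%R) && (sA B s == 0%R)]|)%N = (#|G| ^ t)%N.
Proof.
move=> /set0Pn [a aA] /set0Pn [b bB] nAB.
have [i hi] : exists i, (i \in A) != (i \in B).
  case: (boolP [exists i, (i \in A) != (i \in B)]) => [/existsP//|].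
  rewrite negb_exists => /forallP h; case/eqP: nAB; apply/setP => i.
  by have := h i; rewrite negbK => /eqP.
rewrite expnS expn1 -mulnA.
case iA: (i \in A) hi => /= hi.
  by rewrite mulnA (cardZ2_aux iA hi bB).
have iB : i \in B by move: hi; rewrite negbK.
have -> : [set s : D | (sA A s == 0%R) && (sA B s == 0%R)] =
          [set s : D | (sA B s == 0%R) && (sA A s == 0%R)].
  by apply/setP => s; rewrite !inE andbC.
by rewrite mulnA (cardZ2_aux iB (negbT iA) aA).
Qed.

Lemma card_coord (i : 'I_t) (S : {set G}) :
  (#|G| * #|[set s : D | s i \in S]| = #|S| * #|D|)%N.
Proof.
have hv : forall y, exists v : D, forall s, ((s + v) i == y) = (s i == 0).
  by move=> y; exists (e1 i y) => s; rewrite !ffunE eqxx addr_eq_same.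
have hc := fiber_card hv.
have hf := fiber_eq hv.
rewrite hc mulnCA; congr (_ * _)%N.
transitivity (\sum_(s in [set s : D | s i \in S]) 1)%N; first by rewrite sum1_card.
rewrite (partition_big (fun s : D => s i) (mem S)) /=; last by move=> s; rewrite inE.
rewrite -sum_nat_const; apply: eq_bigr => y yS.
rewrite -(hf y) -sum1_card; apply: eq_bigl => s; rewrite !inE.
by apply/andP/eqP => [[_ /eqP]|->] //.
Qed.

Variable R : realFieldType.

Lemma sumZ (S : {set D}) : \sum_(s : D) (s \in S)%:R = (#|S|%:R : R).
Proof.
rewrite (eq_bigr (fun s => if s \in S then 1 else 0)); last by move=> s _; case: (s \in S).
by rewrite -big_mkcond /= sumr_const.
Qed.

Lemma bad_bound (S : {set G}) :
  (#|G|%:R : R) * #|[set s : D | [exists i, s i \in S]]|%:R <= t%:R * #|S|%:R * #|D|%:R.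
Proof.
have h1 : (#|[set s : D | [exists i, s i \in S]]|%:R : R) <=
          \sum_(i : 'I_t) (#|[set s : D | s i \in S]|%:R : R).
  rewrite -sumZ (eq_bigr (fun i => \sum_(s : D) ((s i) \in S)%:R)); last first.
    by move=> i _; rewrite -sumZ; apply: eq_bigr => s _; rewrite inE.
  rewrite exchange_big /=; apply: ler_sum => s _.
  rewrite inE; case: (boolP [exists i, s i \in S]) => [/existsP [i hi]|_].
    rewrite (bigD1 i) //= hi /= -[X in X <= _]addr0 lerD2l.
    by apply: sumr_ge0 => j _; apply: ler0n.
  by apply: sumr_ge0 => j _; apply: ler0n.
have h2 : forall i, (#|G|%:R : R) * #|[set s : D | s i \in S]|%:R = #|S|%:R * #|D|%:R.
  by move=> i; rewrite -!natrM card_coord.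
rewrite (le_trans (ler_wpM2l (ler0n _ _) h1)) // mulr_sumr.
rewrite (eq_bigr _ (fun i _ => h2 i)) sumr_const card_ord.
by rewrite -[_ *+ t]mulr_natl mulrA lexx.
Qed.

Definition NE := [set A : {set 'I_t} | A != finset.set0].
Definition Z A := [set s : D | sA A s == 0].
Definition Xr (s : D) : R := \sum_(A in NE) (s \in Z A)%:R.
Definition Nset := [set s : D | [forall A in NE, s \notin Z A]].
Local Notation K := (#|G|%:R : R).
Local Notation T := (#|NE|%:R : R).



Lemma cardZ1R A : A \in NE -> K * (#|Z A|%:R) = K ^+ t.
Proof.
rewrite inE => hA; rewrite -natrM -natrX; congr (_%:R).
by rewrite -(cardZ1 hA); congr (_ * _)%N; apply: eq_card => s; rewrite !inE.
Qed.

Lemma sumX : K * \sum_(s : D) Xr s = T * K ^+ t.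
Proof.
rewrite /Xr exchange_big /= mulr_sumr.
rewrite (eq_bigr (fun _ => K ^+ t)) ?sumr_const ?mulr_natl // => A.
rewrite inE => hA; rewrite sumZ -natrM -natrX; congr (_%:R).
by rewrite -(cardZ1 hA); congr (_ * _)%N; apply: eq_card => s; rewrite !inE.
Qed.

Lemma sumX2 : K ^+ 2 * \sum_(s : D) Xr s ^+ 2 = T * K ^+ t.+1 + T * (T - 1) * K ^+ t.
Proof.
have hX : forall s, Xr s ^+ 2 = \sum_(A in NE) \sum_(B in NE) (s \in Z A :&: Z B)%:R.
  move=> s; rewrite expr2 /Xr big_distrlr /=; apply: eq_bigr => A _.
  apply: eq_bigr => B _; rewrite finset.in_setI -natrM mulnb. by [].
rewrite (eq_bigr _ (fun s _ => hX s)) exchange_big /=.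
rewrite (eq_bigr (fun A => \sum_(B in NE) (#|Z A :&: Z B|%:R : R))); last first.
  by move=> A _; rewrite exchange_big /=; apply: eq_bigr => B _; rewrite sumZ.
rewrite mulr_sumr.
rewrite (eq_bigr (fun A => T * K ^+ t + (K ^+ t.+1 - K ^+ t))); last first.
  move=> A; rewrite inE => hA; rewrite mulr_sumr (bigD1 A) /=; last by rewrite inE.
  rewrite finset.setIid.
  have -> : K ^+ 2 * (#|Z A|%:R) = K ^+ t.+1.
    rewrite expr2 -mulrA (cardZ1R (A:=A)) ?exprS ?inE //.
  rewrite (eq_bigr (fun _ => K ^+ t)); last first.
    move=> B /andP [hB nBA]; rewrite inE in hB.
    rewrite -natrX -natrM -natrX; congr (_%:R).
    rewrite -(cardZ2 hA hB (negbT _)); last by rewrite eq_sym (negbTE nBA).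
    by congr (_ * _)%N; apply: eq_card => s; rewrite !inE.
  rewrite sumr_const.
  have -> : #|[pred B in NE | B != A]| = (#|NE|.-1)%N.
    have hA2 : A \in NE by rewrite inE.
    rewrite (cardsD1 A NE) hA2 add1n /=; apply: eq_card => B; rewrite !inE andbC.
    by [].
  have hNE : (0 < #|NE|)%N by apply/card_gt0P; exists A; rewrite inE.
  rewrite -subn1 -[X in _ + X = _]mulr_natr natrB // exprS; ring.
rewrite sumr_const -mulr_natr; ring.
Qed.

Lemma cheb : (#|Nset|%:R : R) * T ^+ 2 <= \sum_(s : D) (K * Xr s - T) ^+ 2.
Proof.
rewrite (bigID (fun s => s \in Nset)) /=.
rewrite -[X in X <= _]addr0; apply: lerD; last by apply: sumr_ge0 => s _; apply: sqr_ge0.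
rewrite (eq_bigr (fun _ => T ^+ 2)) ?sumr_const ?mulr_natl //.
move=> s hs; rewrite /Xr big1 ?mulr0 ?sub0r ?sqrrN // => A hA.
by rewrite inE in hs; move/forallP: hs => /(_ A); rewrite hA /= => /negbTE ->.
Qed.

Lemma expand : \sum_(s : D) (K * Xr s - T) ^+ 2 =
   K ^+ 2 * \sum_(s : D) Xr s ^+ 2 - 2 * T * (K * \sum_(s : D) Xr s) + T ^+ 2 * K ^+ t.
Proof.
rewrite !mulr_sumr.
rewrite (eq_bigr (fun s => (K ^+ 2 * Xr s ^+ 2 - 2 * T * (K * Xr s)) + T ^+ 2)); last first.
  by move=> s _; ring.
rewrite big_split /= sumrB sumr_const.
have -> : #|(xpredT : pred D)| = (#|G| ^ t)%N by rewrite -cardD; apply: eq_card.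
by rewrite -[X in _ + X = _]mulr_natr natrX.
Qed.

Lemma Nset_bound : (0 < #|NE|)%N -> (#|Nset|%:R : R) * T <= K ^+ t.+1.
Proof.
move=> hNE.
have hT : 0 < T by rewrite ltr0n.
have h := cheb; rewrite expand sumX2 sumX in h.
have hK : 0 <= K ^+ t by apply: exprn_ge0; apply: ler0n.
rewrite -(ler_pM2r hT).
rewrite -mulrA -expr2; apply: (le_trans h); rewrite exprS.
have hTa : 0 <= T * K ^+ t by apply: mulr_ge0 => //; apply: ltW.
nra.
Qed.
End Count.

Lemma small_order_card (p t : nat) :
  (#|[set x : 'I_p.+1 | (#[x]%g < t)%N]| <= t * t)%N.
Proof.
case: t => [|t].
  by rewrite leqn0 cards_eq0; apply/eqP/setP => x; rewrite !inE.
pose P := p.+1.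
have key : forall x : 'I_p.+1, (P %| x * #[x]%g)%N.
  move=> x; have := expg_order x; rewrite Zp_expg => /(congr1 val) /=.
  by move=> h; rewrite /dvdn h.
pose f := fun x : 'I_p.+1 => ((inord #[x]%g : 'I_t.+1), (inord ((x * #[x]%g) %/ P) : 'I_t.+1)).
rewrite -(card_in_imset (f := f)).
  apply: leq_trans (max_card _) _; rewrite card_prod card_ord //.
move=> x y; rewrite !inE => hx hy [].
have hd : forall z : 'I_p.+1, ((z * #[z]%g) %/ P < #[z]%g)%N.
  move=> z; rewrite ltn_divLR // mulnC ltn_pmul2l //; exact: order_gt0.
move=> /(congr1 val) /=; rewrite !inordK // => hxy.
rewrite hxy => /(congr1 val) /=; rewrite !inordK; last 2 first.
- by apply: leq_trans (hd y) _; rewrite -hxy; apply: ltnW.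
- by have := hd x; rewrite hxy => h; exact: ltn_trans h hy.
move=> hq; apply: val_inj => /=.
have : (x * #[y]%g = y * #[y]%g)%N.
  have kx := key x; rewrite hxy in kx.
  by rewrite -(divnK kx) -(divnK (key y)) hq.
by move/eqP; rewrite eqn_pmul2r ?order_gt0 // => /eqP.
Qed.

Lemma card_setsNE (t : nat) : #|NE t| = (2 ^ t - 1)%N.
Proof.
have h : #|[set: {set 'I_t}]| = (2 ^ t)%N.
  transitivity #|powerset [set: 'I_t]|; last by rewrite card_powerset cardsT card_ord.
  by apply: eq_card => A; rewrite powersetE finset.subsetT finset.in_setT.
rewrite -h cardsT -(cardsC [set finset.set0 : {set 'I_t}]) cards1 add1n /=.
by rewrite subn1 /=; apply: eq_card => A; rewrite !inE.
Qed.

Lemma card_Zn (n : nat) : (1 < n)%N -> #|'Z_n| = n.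
Proof. by move=> hn; rewrite card_ord Zp_cast. Qed.

Lemma lin_aux (R : realFieldType) (d g N B a b : R) :
  N <= a * d -> B <= b * d -> d <= g + (N + B) -> d - a * d - b * d <= g.
Proof. move=> *; lra. Qed.

Lemma prob_lower (R : realType) (n t : nat) : (1 < n)%N -> (0 < t)%N ->
  1 - n%:R / (2 ^ t - 1)%:R - (t ^ 3)%:R / n%:R <= prob_good R n t.
Proof.
move=> hn ht.
pose S := [set x : 'Z_n | (#[x]%g < t)%N].
pose Bad := [set s : zseq n t | [exists i, s i \in S]].
pose GS := [set s : zseq n t | good s].
have hsub : (#|[set: zseq n t]| <= #|GS| + (#|Nset 'Z_n t| + #|Bad|))%N.
  apply: leq_trans (leq_trans _ (leq_card_setU _ _)) (leq_add (leqnn _) (leq_card_setU _ _)).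
  apply: subset_leq_card; apply/fintype.subsetP => s _.
  rewrite !finset.in_setU.
  case: (boolP (s \in Nset 'Z_n t)) => hN; first by rewrite orbT.
  case: (boolP (s \in Bad)) => hB; first by rewrite !orbT.
  rewrite orbF orbF inE /good.
  rewrite inE negb_forall in hN; case/existsP: hN => A; rewrite negb_imply negbK.
  case/andP => hA hZ.
  apply/existsP; exists A; rewrite inE in hA; rewrite hA /=.
  rewrite inE in hZ; rewrite /sA in hZ; rewrite hZ /=.
  rewrite inE negb_exists in hB; move/forallP: hB => hB.
  rewrite /cross_number.
  have ht' : (0 : rat) < t%:R by rewrite ltr0n.
  apply: (le_trans (y := \sum_(i in A) (t%:R : rat)^-1)).
    apply: ler_sum => i _; rewrite ler_pV2 ?inE ?unitfE ?ltr0n ?pnatr_eq0 -?lt0n ?order_gt0 ?ht ?andbT //.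
    by rewrite ler_nat; have := hB i; rewrite inE -leqNgt.
  rewrite sumr_const -[_ *+ #|A|]mulr_natr -[X in _ <= X](mulVf (x := (t%:R : rat))) ?pnatr_eq0 -?lt0n //.
  by rewrite ler_wpM2l ?invr_ge0 ?ler0n // ler_nat -[X in (_ <= X)%N](card_ord t) max_card.
have hD : #|[set: zseq n t]| = (n ^ t)%N by rewrite cardsT cardD card_Zn.
have hNE : (0 < #|NE t|)%N.
  by rewrite card_setsNE subn_gt0 -{1}(expn0 2) ltn_exp2l.
have NB := @Nset_bound 'Z_n t R hNE.
rewrite card_setsNE card_Zn // in NB.
have BB := @bad_bound 'Z_n t R S.
rewrite card_Zn // cardD card_Zn // in BB.
have hS : (#|S| <= t * t)%N.
  have := small_order_card (Zp_trunc n).+1 t; by [].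
rewrite /prob_good hD.
have hd : (0 : R) < (n ^ t)%:R by rewrite ltr0n expn_gt0 (ltn_trans _ hn).
have hn' : (0 : R) < n%:R by rewrite ltr0n (ltn_trans _ hn).
have hT : (0 : R) < (2 ^ t - 1)%:R by rewrite -card_setsNE ltr0n.
rewrite ler_pdivlMr //.
have hN : (#|Nset 'Z_n t|%:R : R) <= n%:R / (2 ^ t - 1)%:R * (n ^ t)%:R.
  rewrite mulrAC ler_pdivlMr // natrX -exprS; exact: NB.
have hB : (#|Bad|%:R : R) <= (t ^ 3)%:R / n%:R * (n ^ t)%:R.
  rewrite mulrAC ler_pdivlMr // mulrC natrX; apply: (le_trans BB).
  by rewrite -natrX ler_wpM2r ?ler0n // -natrM ler_nat expnS leq_mul2l -mulnn hS orbT.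
have hs : ((n ^ t)%:R : R) <= #|GS|%:R + (#|Nset 'Z_n t|%:R + #|Bad|%:R).
  by rewrite -!natrD ler_nat -hD.
rewrite !mulrBl mul1r; exact: (lin_aux hN hB hs).
Qed.

Section An.
Variable R : realType.

Lemma ln2_ge : (2^-1 : R) <= ln 2.
Proof.
have h1 : (2^-1 : R) <= expR (- 2^-1).
  by apply: le_trans (expR_ge1Dx _); lra.
have h2 : expR (2^-1 : R) <= 2.
  rewrite -[X in _ <= X]invrK -(invrK (expR _)) -expRN.
  rewrite lef_pV2 ?posrE ?expR_gt0 ?invr_gt0 //; lra.
rewrite -[X in X <= _]expRK ler_ln ?posrE ?expR_gt0 //.
Qed.

Definition Xf (k : nat) : R := (3 * lg 5 * lg 7 * lg (k%:R : R)) `^ (3^-1)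
            - (2 / 3) * lg (lg (k%:R : R)).

Lemma key_lb (k : nat) : (2 <= k)%N ->
  ((k%:R : R) `^ (4^-1)) ^+ 2 / 384 <= k%:R * expR (Xf k) / 6.
Proof.
move=> hk.
set x : R := k%:R.
have hx : 2 <= x by rewrite /x (ler_nat R 2 k).
have l2 := ln2_ge.
have l2p : 0 < ln (2 : R) by lra.
set lx := ln x.
have hlx : ln 2 <= lx by rewrite /lx ler_ln ?posrE //; lra.
set L := lg x.
have hL : L = lx / ln 2 by [].
have hL1 : 1 <= L by rewrite hL ler_pdivlMr // mul1r.
have hL2 : L <= 2 * lx.
  rewrite hL ler_pdivrMr //; nra.
have hlL : 0 <= ln L by apply: ln_ge0.
have hX : - (2 * ln L) <= Xf k.
  rewrite /Xf -/x -/L.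
  have hp : 0 <= (3 * lg 5 * lg 7 * L) `^ (3^-1) by apply: powR_ge0.
  have : (2 / 3) * lg L <= 2 * ln L.
    rewrite /lg mulrA ler_pdivrMr //; nra.
  lra.
have hE : 1 <= expR (Xf k) * (L * L).
  apply: le_trans (_ : expR (- (2 * ln L)) * (L * L) <= _); last first.
    have hLL : 0 <= L * L by nra.
    by rewrite ler_wpM2r // ler_expR.
  rewrite expRN mulrDl mul1r expRD lnK ?posrE; last by lra.
  rewrite mulVf ?lexx //; apply: mulf_neq0; apply/eqP; lra.
set u := x `^ (4^-1).
have hu : 0 < u by rewrite powR_gt0 //; lra.
have hxu : x = u ^+ 4.
  rewrite /u -powR_mulrn ?powR_ge0 // -powRrM mulVf ?powRr1 //; lra.
have hlu : lx <= 4 * u.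
  have : ln u < u by apply: ln_sublinear.
  rewrite /u ln_powR -/u -/lx => h; lra.
have hlx0 : 0 <= lx by lra.
have hE0 : 0 < expR (Xf k) by apply: expR_gt0.
rewrite ler_pdivrMr // mulrAC ler_pdivlMr //.
have h1 : L * L <= 64 * (u * u) by nra.
have h2 : 1 <= expR (Xf k) * (64 * (u * u)).
  apply: le_trans hE _; rewrite ler_wpM2l //; lra.
rewrite hxu; nra.
Qed.
End An.

Lemma nat1 k : (3 <= k)%N -> (4 * 35 ^ k + 1 <= 64 ^ k)%N.
Proof.
elim: k => // k IH; rewrite leq_eqVlt => /orP [/eqP <- // | h].
have := IH h; rewrite !expnS; lia.
Qed.

Lemma nat2 k : (3 <= k)%N -> (4 * ((6 * k) * (6 * k) * (6 * k)) <= 35 ^ k)%N.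
Proof.
elim: k => // k IH; rewrite leq_eqVlt => /orP [/eqP <- // | h].
have := IH h; rewrite !expnS; nia.
Qed.

Lemma PZ_half (R : realType) k : (3 <= k)%N -> (2^-1 : R) <= PZ R k (6 * k).
Proof.
move=> hk.
have hn : (1 < 35 ^ k)%N by rewrite -{1}(expn0 35) ltn_exp2l // (leq_trans _ hk).
have ht : (0 < 6 * k)%N by rewrite muln_gt0 (leq_trans _ hk).
apply: le_trans (prob_lower R hn ht).
have e1 : (2 ^ (6 * k))%N = (64 ^ k)%N by rewrite expnM.
have h1 := nat1 hk. have h2 := nat2 hk.
have hT : (4 * 35 ^ k <= 2 ^ (6 * k) - 1)%N by rewrite e1 leq_subRL ?expn_gt0 //; lia.
have hT' : (4 : R) * (35 ^ k)%:R <= (2 ^ (6 * k) - 1)%:R.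
  by rewrite -natrM ler_nat.
have hN : (4 : R) * ((6 * k) ^ 3)%:R <= (35 ^ k)%:R.
  by rewrite -natrM ler_nat expnS expnS expn1 !mulnA; rewrite !mulnA in h2.
have p1 : (0 : R) < (35 ^ k)%:R by rewrite ltr0n (ltn_trans _ hn).
have p2 : (0 : R) < (2 ^ (6 * k) - 1)%:R by apply: lt_le_trans hT'; rewrite mulr_gt0.
have q1 : (35 ^ k)%:R / (2 ^ (6 * k) - 1)%:R <= (4^-1 : R).
  by rewrite ler_pdivrMr // -(ler_pM2l (_ : (0:R) < 4)) // mulrA mulfV // mul1r.
have q2 : ((6 * k) ^ 3)%:R / (35 ^ k)%:R <= (4^-1 : R).
  by rewrite ler_pdivrMr // -(ler_pM2l (_ : (0:R) < 4)) // mulrA mulfV // mul1r.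
lra.
Qed.


Local Open Scope classical_set_scope.


Lemma s_cvgy (R : realType) :
  (k%:R * expR (Xf R k) / 6) @[k --> \oo] --> +oo.
Proof.
apply/cvgryPge => A.
pose M : R := 384 * (`|A| + 1).
have hM : 1 <= M by rewrite /M; have := normr_ge0 A; lra.
near=> k.
have hk2 : (2 <= k)%N by near: k; exact: nbhs_infty_ge.
have hkM : M ^+ 4 <= k%:R by near: k; exact: nbhs_infty_ger.
apply: le_trans (key_lb R hk2).
set u := (k%:R : R) `^ 4^-1.
have huM : M <= u.
  have e : (M ^+ 4) `^ (4^-1) = M.
    by rewrite -powR_mulrn ?(le_trans _ hM) // -powRrM mulfV ?powRr1 ?(le_trans _ hM).
  rewrite -[X in X <= _]e /u; apply: ge0_ler_powR => //.
  - by rewrite nnegrE exprn_ge0 // (le_trans _ hM).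
  - by rewrite nnegrE ler0n.
have hA : A <= `|A| by apply: ler_norm.
have hu1 : 1 <= u := le_trans hM huM.
have : u <= u ^+ 2 by rewrite expr2 ler_peMr //; lra.
rewrite /M in huM.
lra.
Unshelve. all: by end_near.
Qed.

Unset Implicit Arguments.

Theorem corollary3p7 (R : realType) (tau : nat -> R) :
  is_threshold (@PZ R) tau ->
  exists C : R, \forall k \near \oo,
    tau k <= (k%:R) ^+ 2 *
      expR ((3 * lg 5 * lg 7 * lg (k%:R)) `^ (3^-1)
            - (2 / 3) * lg (lg (k%:R)) + C).
Proof.
move=> [tpos hth]; exists 0.
pose s k : R := k%:R * expR (Xf R k) / 6.
have hs : s k @[k --> \oo] --> +oo := @s_cvgy R.
pose F k := if ((6 * k)%N%:R * s k <= tau k) then (6 * k)%N else 0%N.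
have hF : (F k)%:R / tau k @[k --> \oo] --> (0 : R).
  apply: (squeeze_cvgr (f := fun=> 0) (h := fun k => (s k)^-1)).
  - near=> k.
    have hk : (1 <= k)%N by near: k; exact: nbhs_infty_ge.
    have sp : 0 < s k.
      by rewrite /s divr_gt0 // mulr_gt0 ?expR_gt0 // ltr0n.
    rewrite /F; case: ifP => hc.
      rewrite divr_ge0 ?ler0n ?(ltW (tpos k)) //=.
      rewrite ler_pdivrMr ?tpos // mulrC ler_pdivlMr // mulrC; exact: hc.
    by rewrite mul0r lexx invr_ge0 ltW.
  - exact: cvg_cst.
  - apply/gtr0_cvgV0; last exact: hs.
    near=> k.
    have hk : (1 <= k)%N by near: k; exact: nbhs_infty_ge.
    by rewrite divr_gt0 // mulr_gt0 ?expR_gt0 // ltr0n.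
have hP0 := (hth F).2 hF.
have hlt : \forall k \near \oo, PZ R k (F k) < 2^-1.
  by move/cvgr_lt: hP0; apply; rewrite invr_gt0.
near=> k.
have hk : (3 <= k)%N by near: k; exact: nbhs_infty_ge.
have hhalf := PZ_half R hk.
have hnot : ~ ((6 * k)%N%:R * s k <= tau k).
  move=> hc.
  have : PZ R k (F k) < 2^-1 by near: k; exact: hlt.
  by rewrite /F hc; lra.
rewrite addr0.
have : tau k < (6 * k)%N%:R * s k by rewrite ltNge; apply/negP.
rewrite /s /Xf => h; apply: ltW; apply: (lt_le_trans h).
rewrite natrM le_eqVlt; apply/orP; left; apply/eqP; field.
Unshelve. all: by end_near.
Qed.
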